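(* In the setting of the context, for the iterates of ARDCA started at any $u^0\in\mathbb{D}$, we have $z^k\in\mathbb{D}$, $u^k\in\mathbb{D}$ and $v^k\in\mathbb{D}$ for all $k\ge0$ (for every realization of the random indices).
   Context: Integers $n,t\ge1$, $p,m\ge0$, $\widehat n=n+p+m$, $\mathbb{D}=\{u\in\mathbb{R}^{\widehat n}:u_{n+p+1},\dots,u_{\widehat n}\ge0\}$. Data $A\in\mathbb{R}^{t\times n}$ (columns $A_j$), $B\in\mathbb{R}^{p\times t}$ (rows $B_{j,:}$), $b\in\mathbb{R}^p$, $\mu$-strongly convex $f:\mathbb{R}^t\to\mathbb{R}$, convex $M$-Lipschitz $\phi_i:\mathbb{R}\to\mathbb{R}$ ($i\le n$), convex $g_i:\mathbb{R}^t\to\mathbb{R}$ ($i\le m$) with subgradients bounded in norm by $L_{g_i}$. $L_f(x,u)=f(x)+\langle u_{1:n},A^Tx/n\rangle+\langle u_{n+1:n+p},Bx+b\rangle+\sum_iu_{n+p+i}g_i(x)$, $x^*(u)=\arg\min_xL_f(x,u)$, $d(u)=-L_f(x^*(u),u)$, differentiable on $\mathbb{D}$ with gradient $-[(A^Tx^*(u)/n)^T,(Bx^*(u)+b)^T,g_1(x^*(u)),\dots,g_m(x^*(u))]^T$. $h_i=\frac1n\phi_i^*$ for $i\le n$, $h_i\equiv0$ for $n<i\le n+p$, $h_i(s)=0$ if $s\ge0$ and $+\infty$ else for $i>n+p$. $L_j=\|A_j\|^2/(n^2\mu)$ ($j\le n$), $\|B_{j-n,:}\|^2/\mu$ ($n<j\le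 n+p$), $L_{g_{j-n-p}}^2/\mu$ ($j>n+p$). ARDCA: $\theta_0=1/\widehat n$, $\theta_{k+1}=\frac{\sqrt{\theta_k^4+4\theta_k^2}-\theta_k^2}{2}$; $z^0=u^0$; for $k\ge0$: $v^k=\theta_kz^k+(1-\theta_k)u^k$; $i_k$ uniform on $\{1,\dots,\widehat n\}$; $z^{k+1}_{i_k}=\arg\min_{w\in\mathbb{R}}\widehat n\theta_kL_{i_k}(w-z^k_{i_k})^2+\nabla_{i_k}d(v^k)(w-z^k_{i_k})+h_{i_k}(w)$, $z^{k+1}_j=z^k_j$ ($j\ne i_k$); $u^{k+1}=v^k+\widehat n\theta_k(z^{k+1}-z^k)$. *)

(* Defs.v *)
From mathcomp Require Import all_boot all_order all_algebra.
From mathcomp Require Import all_classical all_reals ereal.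
Set Implicit Arguments. Unset Strict Implicit. Unset Printing Implicit Defensive.
Import Order.TTheory GRing.Theory Num.Theory.
Local Open Scope ring_scope.

Section Defs.
Variable R : realType.

Definition dotv (t : nat) (x y : 'I_t -> R) : R := \sum_(i < t) x i * y i.
Definition norm2 (t : nat) (x : 'I_t -> R) : R := Num.sqrt (dotv x x).

Definition strongly_convex (t : nat) (mu : R) (f : ('I_t -> R) -> R) : Prop :=
  forall (x y : 'I_t -> R) (a : R), 0 <= a -> a <= 1 ->
    f (fun i => a * x i + (1 - a) * y i)
      <= a * f x + (1 - a) * f y
         - mu / 2 * a * (1 - a) * (norm2 (fun i => x i - y i)) ^+ 2.

Definition convex_fun (t : nat) (g : ('I_t -> R) -> R) : Prop :=
  forall (x y : 'I_t -> R) (a : R), 0 <= a -> a <= 1 ->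
    g (fun i => a * x i + (1 - a) * y i) <= a * g x + (1 - a) * g y.

Definition convex_fun1 (phi : R -> R) : Prop :=
  forall x y a : R, 0 <= a -> a <= 1 ->
    phi (a * x + (1 - a) * y) <= a * phi x + (1 - a) * phi y.

Definition lipschitz1 (M : R) (phi : R -> R) : Prop :=
  forall x y : R, `|phi x - phi y| <= M * `|x - y|.

Definition is_subgrad (t : nat) (g : ('I_t -> R) -> R) (x s : 'I_t -> R) : Prop :=
  forall y : 'I_t -> R, g x + dotv s (fun i => y i - x i) <= g y.

Definition fconj (phi : R -> R) (s : R) : \bar R :=
  ereal_sup [set (s * x - phi x)%:E | x in [set: R]].

Definition inD (n p m : nat) (u : 'I_(n + p + m) -> R) : Prop :=
  forall k : 'I_m, 0 <= u (rshift (n + p) k).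

Definition hfun (n p m : nat) (phi : 'I_n -> R -> R) (i : 'I_(n + p + m)) (s : R)
  : \bar R :=
  match fintype.split i with
  | inl j => match fintype.split j with
             | inl k => ((n%:R)^-1)%:E * fconj (phi k) s
             | inr _ => 0%E
             end
  | inr _ => if 0 <= s then 0%E else +oo%E
  end.

Definition Lf (t n p m : nat) (A : 'I_t -> 'I_n -> R) (B : 'I_p -> 'I_t -> R)
  (b : 'I_p -> R) (f : ('I_t -> R) -> R) (g : 'I_m -> ('I_t -> R) -> R)
  (x : 'I_t -> R) (u : 'I_(n + p + m) -> R) : R :=
  f x
  + \sum_(k < n) u (lshift m (lshift p k)) * ((\sum_(i < t) A i k * x i) / n%:R)
  + \sum_(k < p) u (lshift m (rshift n k)) * (\sum_(i < t) B k i * x i + b k)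
  + \sum_(k < m) u (rshift (n + p) k) * g k x.

(* gradient of d at u, expressed through x = x^*(u) *)
Definition grad_d (t n p m : nat) (A : 'I_t -> 'I_n -> R) (B : 'I_p -> 'I_t -> R)
  (b : 'I_p -> R) (g : 'I_m -> ('I_t -> R) -> R) (x : 'I_t -> R)
  (i : 'I_(n + p + m)) : R :=
  - match fintype.split i with
    | inl j => match fintype.split j with
               | inl k => (\sum_(l < t) A l k * x l) / n%:R
               | inr k => \sum_(l < t) B k l * x l + b k
               end
    | inr k => g k x
    end.

Definition Lconst (t n p m : nat) (mu : R) (A : 'I_t -> 'I_n -> R)
  (B : 'I_p -> 'I_t -> R) (Lg : 'I_m -> R) (i : 'I_(n + p + m)) : R :=
  match fintype.split i with
  | inl j => match fintype.split j with
             | inl k => (norm2 (fun l => A l k)) ^+ 2 / ((n%:R) ^+ 2 * mu)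
             | inr k => (norm2 (B k)) ^+ 2 / mu
             end
  | inr k => (Lg k) ^+ 2 / mu
  end.

Fixpoint theta (nh : nat) (k : nat) : R :=
  match k with
  | O => (nh%:R)^-1
  | S k' => let th := theta nh k' in
            (Num.sqrt (th ^+ 4 + 4 * th ^+ 2) - th ^+ 2) / 2
  end.

Definition is_argmin (F : R -> \bar R) (w : R) : Prop :=
  forall w' : R, (F w <= F w')%E.

End Defs.

(* Main.v *)
Require Import Defs.
From mathcomp Require Import all_boot all_order all_algebra.
From mathcomp Require Import all_classical all_reals ereal.
From mathcomp Require Import ring lra.
Import Order.TTheory GRing.Theory Num.Theory.
Local Open Scope ring_scope.

Lemma theta_step (R : realType) (th : R) : 0 < th ->
  let th' := (Num.sqrt (th ^+ 4 + 4 * th ^+ 2) - th ^+ 2) / 2 in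
  [/\ 0 < th', th' ^+ 2 = (1 - th') * th ^+ 2 & th' < th].
Proof.
move=> th0 th'.
set S := th ^+ 4 + 4 * th ^+ 2.
have S0 : 0 <= S by rewrite /S; apply: addr_ge0; [exact: exprn_ge0 (ltW th0)|
  apply: mulr_ge0 => //; exact: exprn_ge0 (ltW th0)].
have hs : Num.sqrt S ^+ 2 = S by rewrite sqr_sqrtr.
have s0 : 0 <= Num.sqrt S by exact: sqrtr_ge0.
have hpos : th ^+ 2 < Num.sqrt S.
  have h2 : 0 < th ^+ 2 by exact: exprn_gt0.
  rewrite -(ltr_pXn2r (n:=2)) //; last by rewrite nnegrE ltW.
  rewrite hs /S; nra.
have p1 : 0 < th' by rewrite /th'; lra.
have p2 : th' ^+ 2 = (1 - th') * th ^+ 2.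
  rewrite /th'.
  have -> : th ^+ 4 = th ^+ 2 * th ^+ 2 by rewrite -exprD.
  move: hs; rewrite /S.
  have -> : th ^+ 4 = th ^+ 2 * th ^+ 2 by rewrite -exprD.
  move=> hs; rewrite !expr2 in hs *; nra.
split => //.
have h2 : 0 < th ^+ 2 by exact: exprn_gt0.
rewrite -(ltr_pXn2r (n:=2)) //; first (rewrite p2; nra).
- by rewrite nnegrE ltW.
- by rewrite nnegrE ltW.
Qed.

Lemma theta_props (R : realType) (N : nat) : (1 <= N)%N -> forall k,
  0 < theta R N k /\ theta R N k * N%:R <= 1 /\
  (theta R N k.+1) ^+ 2 = (1 - theta R N k.+1) * (theta R N k) ^+ 2 /\
  theta R N k.+1 <= theta R N k.
Proof.
move=> hN; have N0 : (0 : R) < N%:R by rewrite ltr0n.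
elim => [|k [IH1 [IH2 [IH3 IH4]]]].
- have t0 : 0 < theta R N 0 by rewrite /= invr_gt0.
  have [a b c] := @theta_step _ _ t0.
  split => //; split; first by rewrite /= mulVf // gt_eqF.
  by split => //; apply: ltW.
- have [a b c] := @theta_step _ _ IH1.
  split => //; split.
    apply: le_trans IH2; apply: ler_wpM2r; first exact: ltW.
    exact: IH4.
  have [a' b' c'] := @theta_step _ _ a.
  by split => //; apply: ltW.
Qed.

Theorem lemma3 (R : realType) (n t p m : nat) (hn : (1 <= n)%N) (ht : (1 <= t)%N)
  (A : 'I_t -> 'I_n -> R) (B : 'I_p -> 'I_t -> R) (b : 'I_p -> R)
  (mu M : R) (f : ('I_t -> R) -> R) (phi : 'I_n -> R -> R)
  (g : 'I_m -> ('I_t -> R) -> R) (Lg : 'I_m -> R)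
  (hmu : 0 < mu) (hf : strongly_convex mu f)
  (hphi : forall i, convex_fun1 (phi i) /\ lipschitz1 M (phi i))
  (hg : forall i, convex_fun (g i))
  (hLg : forall i (x s : 'I_t -> R), is_subgrad (g i) x s -> norm2 s <= Lg i)
  (xstar : ('I_(n + p + m) -> R) -> ('I_t -> R))
  (hxstar : forall u, inD u -> forall x, Lf A B b f g (xstar u) u <= Lf A B b f g x u)
  (u0 : 'I_(n + p + m) -> R) (hu0 : inD u0)
  (idx : nat -> 'I_(n + p + m))
  (z u v : nat -> 'I_(n + p + m) -> R)
  (hz0 : z 0%N = u0) (hu0' : u 0%N = u0)
  (hv : forall k j, v k j = theta R (n + p + m) k * z k j
                            + (1 - theta R (n + p + m) k) * u k j)
  (hzi : forall k, is_argmin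
          (fun w : R =>
             ((((n + p + m)%:R * theta R (n + p + m) k
                * Lconst mu A B Lg (idx k)) * (w - z k (idx k)) ^+ 2
               + grad_d A B b g (xstar (v k)) (idx k) * (w - z k (idx k)))%:E
              + hfun phi (idx k) w)%E)
          (z k.+1 (idx k)))
  (hzj : forall k j, j != idx k -> z k.+1 j = z k j)
  (hu : forall k j, u k.+1 j = v k j
                    + (n + p + m)%:R * theta R (n + p + m) k * (z k.+1 j - z k j)) :
  forall k : nat, inD (z k) /\ inD (u k) /\ inD (v k).
Proof.
set N := (n + p + m)%N.
have hN : (1 <= N)%N by rewrite /N; apply: leq_trans hn _; rewrite -addnA leq_addr.
have N1 : (1 : R) <= N%:R by rewrite ler1n.
have TP := @theta_props R N hN.
set th := theta R N.
pose c k : R := if k is k'.+1 then N%:R * th k' else 1.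
have thle1 : forall k, th k <= 1.
  move=> k; have [ta [tb _]] := TP k.
  rewrite /th; nra.
have c0 : forall k, 0 <= c k.
  case => [|k] /=; first by [].
  have [a _] := TP k; apply: mulr_ge0; [exact: ler0n | exact: ltW].
have key : forall k, 0 <= (1 - th k) * c k + (1 - N%:R) * th k.
  case => [|k] /=.
    have [ta [tb _]] := TP 0%N.
    have e : th 0%N * N%:R = 1 by rewrite /th /= mulVf // pnatr_eq0 -lt0n.
    rewrite /th in e *; lra.
  have [ta [tb [td te]]] := TP k.
  have [ta' [tb' _]] := TP k.+1.
  rewrite /th.
  set x := theta R N k in ta tb td te *; set y := theta R N k.+1 in ta' tb' td te *. clearbody x y.
  suff H : 0 <= x * ((1 - y) * (N%:R * x) + (1 - N%:R) * y).
    by rewrite pmulr_rge0 in H.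
  have -> : x * ((1 - y) * (N%:R * x) + (1 - N%:R) * y)
          = y * (N%:R * y - (N%:R - 1) * x).
    move: td; rewrite !expr2 => td.
    have -> : x * ((1 - y) * (N%:R * x) + (1 - N%:R) * y)
       = N%:R * ((1 - y) * (x * x)) + (1 - N%:R) * x * y by ring.
    rewrite -td; ring.
  apply: mulr_ge0; first exact: ltW ta'.
  rewrite subr_ge0.
  rewrite leNgt; apply/negP => hlt.
  have h0 : 0 <= (N%:R - 1) * x by apply: mulr_ge0; [lra | exact: ltW ta].
  have hsq : (N%:R * y) ^+ 2 < ((N%:R - 1) * x) ^+ 2.
    rewrite ltr_pXn2r //; rewrite nnegrE //; apply: mulr_ge0; [lra|exact: ltW ta'].
  move: hsq; rewrite !exprMn td => hsq.
  have hx2 : 0 < x ^+ 2 by exact: exprn_gt0.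
  have : N%:R ^+ 2 * (1 - y) < (N%:R - 1) ^+ 2.
    by rewrite -(ltr_pM2r hx2) -mulrA.
  have hNy : N%:R * (y * N%:R) <= N%:R * 1 by apply: ler_wpM2l => //; lra.
  rewrite !expr2; nra.
have zstep : forall k, inD (z k) -> inD (z k.+1).
  move=> k hzk kk.
  have [E|NE] := eqVneq (rshift (n + p) kk) (idx k); last first.
    by rewrite hzj // ?hzk //; rewrite eq_sym.
  have hsp : fintype.split (rshift (n + p) kk) = inr kk := unsplitK (inr kk).
  rewrite E; have H := hzi k 0.
  have hf0 : hfun phi (idx k) 0 = 0%E.
    by rewrite /hfun -E hsp lexx.
  rewrite hf0 adde0 in H.
  rewrite leNgt; apply/negP => hneg.
  move: H; rewrite /hfun -E hsp (_ : (0 <= _) = false); last first.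
    by apply/negbTE; rewrite -ltNge E.
  by rewrite addey // leye_eq.
have inv : forall k, inD (z k) /\ forall kk : 'I_m,
    c k * z k (rshift (n + p) kk) <= u k (rshift (n + p) kk).
  elim => [|k [hzk hck]].
    by rewrite hz0 hu0' /=; split => // kk; rewrite mul1r.
  split; first exact: zstep.
  move=> kk.
  have hz' := zstep k hzk kk; have hzk' := hzk kk; have hk := hck kk.
  have hkey := key k.
  rewrite hu hv /=.
  set j := rshift (n + p) kk in hz' hzk' hk *.
  have h1 : (1 - th k) * (c k * z k j) <= (1 - th k) * u k j.
    by apply: ler_wpM2l => //; rewrite subr_ge0.
  have h2 : 0 <= ((1 - th k) * c k + (1 - N%:R) * th k) * z k j.
    exact: mulr_ge0.
  rewrite -/N -/th; nra.
move=> k; have [hzk hck] := inv k.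
have hu_ : inD (u k).
  move=> kk; apply: le_trans (hck kk); apply: mulr_ge0 => //; exact: hzk.
split => //; split => // kk.
rewrite hv; have [a _] := TP k.
apply: addr_ge0; apply: mulr_ge0.
- exact: ltW.
- exact: hzk.
- by rewrite subr_ge0; exact: thle1.
- exact: hu_.
Qed.
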